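(* For positive integers $m, r$ with $r$ even and $m \geq 4$, $C_m(r) = 3$.
   Context: For positive integers $m, r$, $C_m(r)$ is the minimum odd positive integer $n$ such that there exist vectors $v_1, \ldots, v_n \in \mathbb{Z}^m$ (not necessarily distinct) with $|v_i| = \sqrt{r}$ for every $i$ and $v_1 + \cdots + v_n = \mathbf{0}$; if no such odd $n$ exists, $C_m(r) = 0$. Here $|\cdot|$ is the Euclidean norm. *)

(* Defs.v *)
From mathcomp Require Import all_boot all_order all_algebra.
From Stdlib Require Import ClassicalEpsilon.
Set Implicit Arguments. Unset Strict Implicit. Unset Printing Implicit Defensive.
Import Order.TTheory GRing.Theory Num.Theory.
Local Open Scope ring_scope.

Definition sqnorm (m : nat) (v : 'I_m -> int) : int := \sum_(j < m) v j ^+ 2.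

Definition zero_sum_config (m r n : nat) : Prop :=
  exists v : 'I_n -> 'I_m -> int,
    (forall i, sqnorm (v i) = r%:Z) /\ (forall j : 'I_m, \sum_(i < n) v i j = 0).

Definition decide (P : Prop) : bool :=
  if excluded_middle_informative P then true else false.

Definition odd_config (m r : nat) : pred nat :=
  fun n => odd n && decide (zero_sum_config m r n).

(* C_m(r): least odd positive n with such a configuration, or 0 if none.
   (odd n already implies n > 0.) *)
Definition C (m r : nat) : nat :=
  match excluded_middle_informative (exists n, odd_config m r n) with
  | left H => ex_minn H
  | right _ => 0%N
  end.

(* Main.v *)
Require Import Defs.
From mathcomp Require Import all_boot all_order all_algebra zify ring lra.
From Stdlib Require Import ClassicalEpsilon.
Import Order.TTheory GRing.Theory Num.Theory.

Lemma sq_inj (p h x x' : nat) : prime p -> p = h.*2.+1 -> (x <= h)%N -> (x' <= h)%N ->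
  x * x = x' * x' %[mod p] -> x = x'.
Proof.
move=> pp ph.
wlog le : x x' / (x' <= x)%N.
  move=> W hx hx' H; case: (leqP x' x) => l; first exact: W.
  by apply/esym; apply: W; [exact: ltnW|done|done|by rewrite H].
move=> hx hx' /eqP H.
rewrite eqn_mod_dvd in H; last by nia.
move: H; have -> : (x*x - x'*x' = (x-x')*(x+x'))%N by nia.
rewrite Euclid_dvdM // => /orP[] d.
  have [e|ne] := eqVneq x x'; first by [].
  have := dvdn_leq _ d; lia.
have [e|ne] := eqVneq x x'; first by [].
have := dvdn_leq _ d; lia.
Qed.

Lemma addmod (p u v c : nat) : u = v %[mod p] -> u + c = v + c %[mod p].
Proof. by move=> H; rewrite -modnDml H modnDml. Qed.

Lemma cross (p x y : nat) : (y < p)%N ->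
  x * x = p * p - (y * y).+1 %[mod p] -> (p %| x * x + y * y + 1)%N.
Proof.
move=> yp /(@addmod p _ _ ((y*y).+1)).
have -> : (p * p - (y * y).+1 + (y * y).+1 = p * p + 0)%N by nia.
rewrite modnMDl mod0n => H.
by rewrite /dvdn addn1 -addnS H.
Qed.

Lemma pigeon (p h : nat) : prime p -> p = h.*2.+1 ->
  exists x y : nat, [/\ (x <= h)%N, (y <= h)%N & (p %| x * x + y * y + 1)%N].
Proof.
move=> pp ph.
have p0 := prime_gt0 pp.
set B := [exists x : 'I_h.+1, exists y : 'I_h.+1, (p %| x * x + y * y + 1)%N].
case: (boolP B) => [/existsP[x /existsP[y H]]|nB].
  by exists x, y; split => //; rewrite -ltnS.
exfalso.
pose f (s : 'I_h.+1 + 'I_h.+1) : 'I_p :=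
  match s with
  | inl x => Ordinal (ltn_pmod (x * x) p0)
  | inr y => Ordinal (ltn_pmod (p * p - (y * y).+1) p0)
  end.
suff fi : injective f.
  have := leq_card _ fi; rewrite card_sum !card_ord; lia.
have nC : forall x y : 'I_h.+1, x * x = p * p - (y * y).+1 %[mod p] -> False.
  move=> x y H; move/negP: nB; apply; apply/existsP; exists x; apply/existsP; exists y.
  apply: cross H; have := ltn_ord y; lia.
have hi : forall x : 'I_h.+1, (x <= h)%N by move=> x; rewrite -ltnS.
case=> [x|y] [x'|y'] /(congr1 val) /= H.
- by congr inl; apply: ord_inj; exact: (@sq_inj p h x x' pp ph (hi x) (hi x') H).
- by case: (nC _ _ H).
- by case: (nC _ _ (esym H)).
- congr inr; apply: ord_inj; rewrite /=; apply: (@sq_inj p h y y' pp ph (hi y) (hi y')).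
  have a1 : ((y * y).+1 <= p * p)%N by have := hi y; nia.
  have a2 : ((y' * y').+1 <= p * p)%N by have := hi y'; nia.
  move: H => /(@addmod p _ _ ((y * y).+1 + (y' * y').+1)).
  have -> : (p * p - (y * y).+1 + ((y * y).+1 + (y' * y').+1) = p * p + (y' * y').+1)%N by lia.
  have -> : (p * p - (y' * y').+1 + ((y * y).+1 + (y' * y').+1) = p * p + (y * y).+1)%N by lia.
  rewrite !modnMDl => /eqP; rewrite -[(y * y).+1]addn1 -[(y' * y').+1]addn1 eqn_modDr eq_sym => /eqP; done.
Qed.

Local Open Scope ring_scope.

Definition foursq (n : int) := exists a b c d : int, n = a*a + b*b + c*c + d*d.

Lemma foursqM x y : foursq x -> foursq y -> foursq (x * y).
Proof.
move=> [x1 [x2 [x3 [x4 ->]]]] [y1 [y2 [y3 [y4 ->]]]].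
exists (x1*y1 + x2*y2 + x3*y3 + x4*y4), (x1*y2 - x2*y1 + x3*y4 - x4*y3),
  (x1*y3 - x3*y1 + x4*y2 - x2*y4), (x1*y4 - x4*y1 + x2*y3 - x3*y2).
ring.
Qed.

Lemma no_div (p m : nat) (s : int) : prime p -> (1 < m < p)%N -> p%:Z = m%:Z * s -> False.
Proof.
move=> pp hm H.
have p0 := prime_gt0 pp.
have s0 : 0 <= s by nia.
have Hs : s = (`|s|%N)%:Z by rewrite gez0_abs.
rewrite Hs -PoszM in H; case: H => H.
have : (m %| p)%N by apply/dvdnP; exists `|s|%N; rewrite mulnC.
case/primeP: pp => _ /[apply] /orP[/eqP|/eqP]; lia.
Qed.

Lemma round (x M : int) : 0 < M -> exists q : int, - M < 2 * (x - M * q) <= M.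
Proof.
move=> M0.
have := divz_eq x M; have := modz_ge0 x (lt0r_neq0 M0); have := ltz_pmod x M0.
set q := (x %/ M)%Z; set r := (x %% M)%Z => h1 h2 h3.
case: (lerP (2 * r) M) => h4.
  exists q; lia.
exists (q + 1); lia.
Qed.

Lemma sqb (y M : int) : - M < 2 * y <= M -> 4 * (y * y) <= M * M.
Proof. move=> /andP[h1 h2]; nia. Qed.
Lemma sqeq (y M : int) : - M < 2 * y <= M -> 4 * (y * y) = M * M -> 2 * y = M.
Proof. move=> /andP[h1 h2] h; nia. Qed.
Lemma pos_r (M r s : int) : 0 < M -> M * r = s -> 0 <= s -> 0 <= r.
Proof. move=> h1 h2 h3; nia. Qed.
Lemma le_r (M r s : int) : 0 < M -> M * r = s -> 4 * s <= 4 * (M * M) -> r <= M.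
Proof. move=> h1 h2 h3; nia. Qed.

Lemma sq0 (a b c d : int) : a*a + b*b + c*c + d*d = 0 -> a = 0.
Proof. move=> h; nia. Qed.
Lemma descent (p : nat) : prime p -> forall m : nat, (0 < m < p)%N ->
  foursq (m%:Z * p%:Z) -> foursq p%:Z.
Proof.
move=> pp; elim/ltn_ind => m IH /andP[m0 mp] [x1 [x2 [x3 [x4 Hx]]]].
have [m1e|m1] := eqVneq m 1%N.
  by exists x1, x2, x3, x4; rewrite -Hx m1e mul1r.
have m1' : (1 < m)%N by lia.
move: Hx; have [M EM] : exists M : int, M = m%:Z by eexists.
have [P EP] : exists P : int, P = p%:Z by eexists.
rewrite -EM -EP => Hx.
have M0 : 0 < M by rewrite EM; lia.
have [q1 h1] := @round x1 M M0.
have [q2 h2] := @round x2 M M0.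
have [q3 h3] := @round x3 M M0.
have [q4 h4] := @round x4 M M0.
move: h1 h2 h3 h4.
have [y1 Ey1] : exists y : int, y = x1 - M * q1 by eexists.
have [y2 Ey2] : exists y : int, y = x2 - M * q2 by eexists.
have [y3 Ey3] : exists y : int, y = x3 - M * q3 by eexists.
have [y4 Ey4] : exists y : int, y = x4 - M * q4 by eexists.
rewrite -Ey1 -Ey2 -Ey3 -Ey4 => h1 h2 h3 h4.
have Fx1 : x1 = y1 + M * q1 by rewrite Ey1; ring.
have Fx2 : x2 = y2 + M * q2 by rewrite Ey2; ring.
have Fx3 : x3 = y3 + M * q3 by rewrite Ey3; ring.
have Fx4 : x4 = y4 + M * q4 by rewrite Ey4; ring.
have [r Er] : exists r : int, r = P - 2 * (x1*q1 + x2*q2 + x3*q3 + x4*q4) + M * (q1*q1+q2*q2+q3*q3+q4*q4) by eexists.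
have Hy : y1*y1 + y2*y2 + y3*y3 + y4*y4 = M * r.
  have -> : y1*y1 + y2*y2 + y3*y3 + y4*y4 = (x1*x1 + x2*x2 + x3*x3 + x4*x4)
     - M * (2 * (x1*q1 + x2*q2 + x3*q3 + x4*q4) - M * (q1*q1+q2*q2+q3*q3+q4*q4)).
    rewrite Ey1 Ey2 Ey3 Ey4; ring.
  rewrite -Hx Er; ring.
have b1 := @sqb _ _ h1. have b2 := @sqb _ _ h2. have b3 := @sqb _ _ h3. have b4 := @sqb _ _ h4.
have r0 : 0 <= r.
  apply: (@pos_r M r _ M0 (esym Hy)).
  have := sqr_ge0 y1; have := sqr_ge0 y2; have := sqr_ge0 y3; have := sqr_ge0 y4.
  rewrite !expr2; lia.
have rM : r <= M.
  apply: (@le_r M r _ M0 (esym Hy)); lia.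
have [rz|rnz] := eqVneq r 0.
  exfalso.
  rewrite rz mulr0 in Hy.
  have e1 : y1 = 0 by apply: (@sq0 y1 y2 y3 y4 Hy).
  have e2 : y2 = 0 by apply: (@sq0 y2 y1 y3 y4); rewrite -Hy; ring.
  have e3 : y3 = 0 by apply: (@sq0 y3 y1 y2 y4); rewrite -Hy; ring.
  have e4 : y4 = 0 by apply: (@sq0 y4 y1 y2 y3); rewrite -Hy; ring.
  apply: (@no_div p m (q1*q1+q2*q2+q3*q3+q4*q4) pp); first by lia.
  apply: (mulfI (lt0r_neq0 M0)); rewrite -EP -EM Hx.
  rewrite Fx1 Fx2 Fx3 Fx4 e1 e2 e3 e4; ring.
have [rm|rnm] := eqVneq r M.
  exfalso.
  rewrite rm in Hy.
  have e1 : 2 * y1 = M by apply: sqeq => //; lia.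
  have e2 : 2 * y2 = M by apply: sqeq => //; lia.
  have e3 : 2 * y3 = M by apply: sqeq => //; lia.
  have e4 : 2 * y4 = M by apply: sqeq => //; lia.
  apply: (@no_div p m (q1*q1+q2*q2+q3*q3+q4*q4 + q1 + q2 + q3 + q4 + 1) pp); first by lia.
  apply: (mulfI (lt0r_neq0 M0)); apply: (@mulfI _ 4) => //; rewrite -EP -EM.
  rewrite Hx.
  rewrite Fx1 Fx2 Fx3 Fx4.
  have f2 : y2 = y1 by lia.
  have f3 : y3 = y1 by lia.
  have f4 : y4 = y1 by lia.
  rewrite f2 f3 f4 -e1; ring.
have rlt : 0 < r < M by lia.
have Hr : r = (`|r|%N)%:Z by rewrite gez0_abs.
have rlt' : (0 < `|r| < m)%N by lia.
rewrite EP; apply: (IH `|r|%N); [lia | lia |].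
rewrite -Hr -EP.
set w1 := P - (x1*q1 + x2*q2 + x3*q3 + x4*q4).
set w2 := - x1*q2 + x2*q1 - x3*q4 + x4*q3.
set w3 := - x1*q3 + x3*q1 - x4*q2 + x2*q4.
set w4 := - x1*q4 + x4*q1 - x2*q3 + x3*q2.
exists w1, w2, w3, w4.
apply: (mulfI (lt0r_neq0 M0)); apply: (mulfI (lt0r_neq0 M0)).
have z1 : x1*y1 + x2*y2 + x3*y3 + x4*y4 = M * w1.
  rewrite /w1 Ey1 Ey2 Ey3 Ey4.
  have -> : M * (P - (x1 * q1 + x2 * q2 + x3 * q3 + x4 * q4)) = M * P - M * (x1 * q1 + x2 * q2 + x3 * q3 + x4 * q4) by ring.
  rewrite Hx; ring.
have z2 : x1*y2 - x2*y1 + x3*y4 - x4*y3 = M * w2 by rewrite /w2 Ey1 Ey2 Ey3 Ey4; ring.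
have z3 : x1*y3 - x3*y1 + x4*y2 - x2*y4 = M * w3 by rewrite /w3 Ey1 Ey2 Ey3 Ey4; ring.
have z4 : x1*y4 - x4*y1 + x2*y3 - x3*y2 = M * w4 by rewrite /w4 Ey1 Ey2 Ey3 Ey4; ring.
have Eu : (x1*x1 + x2*x2 + x3*x3 + x4*x4) * (y1*y1 + y2*y2 + y3*y3 + y4*y4) =
  (x1*y1 + x2*y2 + x3*y3 + x4*y4)^+2 + (x1*y2 - x2*y1 + x3*y4 - x4*y3)^+2 +
  (x1*y3 - x3*y1 + x4*y2 - x2*y4)^+2 + (x1*y4 - x4*y1 + x2*y3 - x3*y2)^+2 by ring.
rewrite z1 z2 z3 z4 -Hx Hy in Eu.
have -> : M * (M * (r * P)) = M * P * (M * r) by ring.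
rewrite Eu; ring.
Qed.

Lemma foursq_prime p : prime p -> foursq p%:Z.
Proof.
move=> pp; case: (even_prime pp) => [->|op].
  by exists 1, 1, 0, 0.
set h := p./2.
have ph : p = h.*2.+1 by rewrite -[LHS]odd_double_half op.
have [x [y [hx hy hd]]] := @pigeon p h pp ph.
set m := ((x * x + y * y + 1) %/ p)%N.
have Hm : (m * p = x * x + y * y + 1)%N by rewrite divnK.
have bd : (x * x + y * y + 1 < p * p)%N.
  have hx2 := leq_mul hx hx; have hy2 := leq_mul hy hy.
  have e : ((2 * h).+1 * (2 * h).+1 = 4 * (h * h) + 4 * h + 1)%N by ring.
  have := prime_gt1 pp; rewrite ph -mul2n e; lia.
have mlt : (0 < m < p)%N.
  apply/andP; split; first by rewrite lt0n; apply/eqP => m0; rewrite m0 in Hm; lia.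
  rewrite ltnNge; apply/negP => H; have := leq_mul H (leqnn p); lia.
apply: (@descent p pp m mlt).
exists x%:Z, y%:Z, 1, 0.
rewrite -PoszM Hm; lia.
Qed.

Lemma foursq_nat n : foursq n%:Z.
Proof.
elim/ltn_ind: n => n IH.
case: (leqP n 1) => n1.
  case: n n1 {IH} => [|[|]] // _; first by exists 0, 0, 0, 0.
  by exists 1, 0, 0, 0.
have pp := pdiv_prime n1.
have dv := pdiv_dvd n.
rewrite -(divnK dv) PoszM; apply: foursqM; last exact: foursq_prime.
apply: IH; apply: ltn_Pdiv; [exact: prime_gt1 | lia].
Qed.

Definition w (a b c d : int) (i j : nat) : int :=
  match i, j with
  | 0, 0 => a + b | 0, 1 => b - a | 0, 2 => c - d | 0, 3 => c + d
  | 1, 0 => c - b | 1, 1 => a + d | 1, 2 => d - a | 1, 3 => - b - c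
  | 2, 0 => - a - c | 2, 1 => - b - d | 2, 2 => a - c | 2, 3 => b - d
  | _, _ => 0
  end.

Lemma config3 (m r : nat) : (0 < r)%N -> ~~ odd r -> (4 <= m)%N -> zero_sum_config m r 3.
Proof.
move=> r0 er m4.
have [k Hk] : exists k, r = (k.*2)%N by exists r./2; rewrite -[LHS]odd_double_half (negbTE er).
have [a [b [c [d Habcd]]]] := foursq_nat k.
have [m' ->] : exists m', m = m'.+4 by exists (m - 4)%N; lia.
exists (fun (i : 'I_3) (j : 'I_m'.+4) => w a b c d i j); split.
  move=> i; rewrite /sqnorm.
  rewrite -(big_mkord xpredT (fun j => (w a b c d i j) ^+ 2)).
  rewrite !big_nat_recl //.
  rewrite big1 ?addr0; last by move=> j _; case: i => [[|[|[|i]]] Hi] /=; rewrite expr0n.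
  have Hr : r%:Z = 2 * (a * a + b * b + c * c + d * d) by rewrite -Habcd Hk -mul2n PoszM.
  rewrite Hr; case: i => [[|[|[|i]]] Hi] //=; ring.
move=> j.
rewrite -(big_mkord xpredT (fun i => w a b c d i j)).
rewrite !big_nat_recl // big_geq //.
case: j => [[|[|[|[|j]]]] Hj] /=; ring.
Qed.

Lemma no1 (m r : nat) : (0 < r)%N -> ~ zero_sum_config m r 1.
Proof.
move=> r0 [v [Hn Hs]].
have z : forall j, v ord0 j = 0 by move=> j; have := Hs j; rewrite big_ord1.
have := Hn ord0; rewrite /sqnorm big1; last by move=> j _; rewrite z expr0n.
lia.
Qed.

Theorem lemma4 (m r : nat) : (0 < r)%N -> ~~ odd r -> (4 <= m)%N -> C m r = 3%N.
Proof.
move=> r0 er m4.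
have c3 : odd_config m r 3.
  rewrite /odd_config /decide; case: excluded_middle_informative => // H.
  by case: H; apply: config3.
rewrite /C; case: excluded_middle_informative => [H|H]; last by case: H; exists 3%N.
case: (ex_minnP H) => n Hn Hmin.
have := Hmin _ c3.
move: Hn; rewrite /odd_config /decide.
case: excluded_middle_informative => Hc; rewrite ?andbF ?andbT // => on nle.
move: Hc on nle; case: n {Hmin} => [|[|[|[|n]]]] //= Hc _ _.
by case: (@no1 m r r0 Hc).
Qed.
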